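(* Let $p\in[1,\infty]$. (i) If $\mathcal A\subsetneq\mathcal B$ are $\sigma$-subfields, then $\|\mathbb P_{\mathcal B}-\mathbb P_{\mathcal A}\|_{L^p\to L^p}\ge1$. (ii) If $\mathcal A,\mathcal B$ are $\sigma$-subfields and there is $A\in\mathcal A$ with $\mathbb P(A)\in(0,1)$ that is independent of $\mathcal B$, then $\|\mathbb P_{\mathcal A}-\mathbb P_{\mathcal B}\|_{L^p\to L^p}\ge1$. Consequently, for $\sigma$-subfields $(\mathcal B_n)_{n\in\mathbb N_0}$, $\|\mathbb P_{\mathcal B_n}-\mathbb P_{\mathcal B_0}\|_{L^p\to L^p}\not\to0$ whenever either for infinitely many $n$ one has $\mathcal B_n\subsetneq\mathcal B_0$ or $\mathcal B_0\subsetneq\mathcal B_n$, or for infinitely many $n$ one of $\mathcal B_n,\mathcal B_0$ contains an event of probability in $(0,1)$ independent of the other. In particular, a monotone (increasing or decreasing) sequence of $\sigma$-subfields that is not ultimately constant never converges to its limit $\bigvee_n\mathcal B_n$ (resp. $\bigcap_n\mathcal B_n$) in the $L^p\to L^p$ operator norm.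
   Context: Let $(\Omega,\mathcal F,\mathbb P)$ be a (not necessarily complete) probability space and $\mathcal N:=\{F\in\mathcal F:\mathbb P(F)=0\}$. A $\sigma$-subfield is a sub-$\sigma$-field $\mathcal A\subset\mathcal F$ with $\mathcal A=\sigma(\mathcal A\cup\mathcal N)$. For a $\sigma$-subfield $\mathcal A$, $\mathbb P_{\mathcal A}f:=\mathbb E^{\mathbb P}[f\mid\mathcal A]$, viewed as a bounded linear operator on the real normed space $L^p(\mathbb P)$; $\|\cdot\|_{L^p\to L^p}$ is the operator norm. *)

(* Defs.v *)
From HB Require Import structures.
From mathcomp Require Import all_boot all_order all_algebra.
From mathcomp Require Import all_classical all_reals all_analysis.
Set Implicit Arguments. Unset Strict Implicit. Unset Printing Implicit Defensive.
Import Order.TTheory GRing.Theory Num.Theory.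
Local Open Scope classical_set_scope.
Local Open Scope ring_scope.

Definition null_sets d (T : measurableType d) (R : realType)
  (P : probability T R) : set (set T) :=
  [set N | measurable N /\ P N = 0%E].

Definition sigma_subfield d (T : measurableType d) (R : realType)
  (P : probability T R) (A : set (set T)) : Prop :=
  A `<=` measurable /\ A = <<s A `|` null_sets P >>.

Definition sf_measurable d (T : measurableType d) (R : realType)
  (A : set (set T)) (g : T -> R) : Prop :=
  forall B : set R, measurable B -> A (g @^-1` B).

Definition is_cond_exp d (T : measurableType d) (R : realType)
  (P : probability T R) (A : set (set T)) (f g : T -> R) : Prop :=
  [/\ sf_measurable A g, P.-integrable setT (EFin \o g) &
      forall G, A G -> (\int[P]_(x in G) (g x)%:E = \int[P]_(x in G) (f x)%:E)%E].

(* P_A f : a (chosen) version of the conditional expectation (0 if none). *)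
Definition cond_exp d (T : measurableType d) (R : realType)
  (P : probability T R) (A : set (set T)) (f : T -> R) : T -> R :=
  xget (fun _ => 0) [set g | is_cond_exp P A f g].

Definition Lp_fun d (T : measurableType d) (R : realType)
  (P : probability T R) (p : \bar R) (f : T -> R) : Prop :=
  measurable_fun setT f /\ (Lnorm P p (EFin \o f) < +oo)%E.

Definition opnorm d (T : measurableType d) (R : realType)
  (P : probability T R) (p : \bar R) (Op : (T -> R) -> (T -> R)) : \bar R :=
  ereal_sup [set Lnorm P p (EFin \o Op f) |
               f in [set f | Lp_fun P p f /\ (Lnorm P p (EFin \o f) <= 1)%E]].

Definition indep_event d (T : measurableType d) (R : realType)
  (P : probability T R) (E : set T) (B : set (set T)) : Prop :=
  forall G, B G -> P (E `&` G) = (P E * P G)%E.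

Definition has_indep_event d (T : measurableType d) (R : realType)
  (P : probability T R) (A B : set (set T)) : Prop :=
  exists E, [/\ A E, (0 < P E)%E, (P E < 1)%E & indep_event P E B].

(* Main.v *)
Require Import Defs.
From HB Require Import structures.
From mathcomp Require Import all_boot all_order all_algebra.
From mathcomp Require Import all_classical all_reals all_analysis.
From mathcomp Require Import ess_sup_inf measurable_realfun.
Import Order.TTheory GRing.Theory Num.Theory.
Local Open Scope classical_set_scope.
Local Open Scope ring_scope.
Set Implicit Arguments. Unset Strict Implicit. Unset Printing Implicit Defensive.
Section S.
Context d (T : measurableType d) (R : realType) (P : probability T R).

Lemma ssf_salg A : sigma_subfield P A -> sigma_algebra setT A.
Proof. by case=> _ ->; exact: smallest_sigma_algebra. Qed.

Lemma ssf_null A N : sigma_subfield P A -> measurable N -> P N = 0%E -> A N.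
Proof. by case=> _ -> mN PN; apply: sub_gen_smallest; right. Qed.

Lemma ssf_gsat A : sigma_subfield P A ->
  (@measurable _ (g_sigma_algebraType A)) = A.
Proof. by move=> /ssf_salg; exact: sigma_algebra_id. Qed.

Lemma sf_mfun A (g : T -> R) : sigma_subfield P A -> sf_measurable A g ->
  measurable_fun [set: g_sigma_algebraType A] g.
Proof.
move=> sA mg _ B mB; rewrite setTI (ssf_gsat sA); exact: mg.
Qed.

Lemma mfun_sf A (g : T -> R) : sigma_subfield P A ->
  measurable_fun [set: g_sigma_algebraType A] g -> sf_measurable A g.
Proof.
move=> sA mg B mB; have := mg measurableT B mB; rewrite setTI (ssf_gsat sA).
by [].
Qed.

Lemma sf_meas A (g : T -> R) : sigma_subfield P A -> sf_measurable A g ->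
  measurable_fun [set: T] g.
Proof. move=> [sA _] mg _ B mB; rewrite setTI; apply: sA; exact: mg. Qed.

End S.
Section S2.
Context d (T : measurableType d) (R : realType) (P : probability T R).
Local Open Scope ereal_scope.

Lemma null_pos (D : set T) (u : T -> R) : measurable D ->
  P.-integrable D (EFin \o u) -> (forall x, D x -> (0 < u x)%R) ->
  \int[P]_(x in D) (u x)%:E <= 0 -> P D = 0.
Proof.
move=> mD iu u0 ile.
have mu := measurable_int P iu.
have h0 : \int[P]_(x in D) `|(EFin \o u) x| = 0.
  apply/eqP; rewrite eq_le integral_ge0 ?andbT; last by move=> *; exact: abse_ge0.
  rewrite (eq_integral (fun x => (u x)%:E)) // => x /set_mem Dx.
  have ux := ltW (u0 _ Dx); by rewrite /= ?gee0_abs ?ger0_norm // ?lee_fin.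
have [N [mN N0 sN]] := (ae_eq_integral_abs P mD mu).1 h0.
apply: (subset_measure0 (mu:=P) mD mN _ N0) => x Dx; apply: sN => /= h.
by have := h Dx; move/eqP; rewrite /cst eqe gt_eqF // u0.
Qed.
End S2.
Section S3.
Context d (T : measurableType d) (R : realType) (P : probability T R).
Local Open Scope ereal_scope.

Lemma intB_EFin (D : set T) (g h : T -> R) : measurable D ->
  P.-integrable D (EFin \o g) -> P.-integrable D (EFin \o h) ->
  P.-integrable D (EFin \o (g \- h)%R).
Proof.
move=> mD ig ih.
rewrite (_ : EFin \o (g \- h)%R = (EFin \o g) \- (EFin \o h)); last first.
  by apply/funext => x /=; rewrite EFinB.
exact: integrableB.
Qed.

Lemma meas_lt (g h : T -> R) : measurable_fun setT g -> measurable_fun setT h ->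
  measurable [set x | (h x < g x)%R].
Proof.
move=> mg mh.
have := measurable_realfun.measurable_funB mg mh measurableT (measurable_itv `]0%R, +oo[).
rewrite setTI.
suff -> : [set x | (h x < g x)%R] = (g \- h)%R @^-1` `]0%R, +oo[ by [].
by apply/seteqP; split => x /=; rewrite in_itv /= andbT subr_gt0.
Qed.

Lemma lt_null A (g h : T -> R) : sigma_subfield P A ->
  sf_measurable A g -> sf_measurable A h ->
  P.-integrable setT (EFin \o g) -> P.-integrable setT (EFin \o h) ->
  (forall G, A G -> \int[P]_(x in G) (g x)%:E = \int[P]_(x in G) (h x)%:E) ->
  P [set x | (h x < g x)%R] = 0.
Proof.
move=> sA mg mh ig ih e.
have AD : A [set x | (h x < g x)%R].
  have mgh := measurable_realfun.measurable_funB (sf_mfun sA mg) (sf_mfun sA mh).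
  have := mgh measurableT _ (measurable_itv `]0%R, +oo[).
  rewrite setTI (ssf_gsat sA).
  suff -> : [set x | (h x < g x)%R] = (g \- h)%R @^-1` `]0%R, +oo[ by [].
  by apply/seteqP; split => x /=; rewrite in_itv /= andbT subr_gt0.
have mD : measurable [set x | (h x < g x)%R] := sA.1 _ AD.
have igD := integrableS measurableT mD (@subsetT _ _) ig.
have ihD := integrableS measurableT mD (@subsetT _ _) ih.
apply: (null_pos mD (u := (g \- h)%R)).
- exact: intB_EFin.
- by move=> x /=; rewrite subr_gt0.
rewrite (eq_integral (fun x => (g x)%:E - (h x)%:E)); last first.
  by move=> x _; rewrite /= EFinB.
rewrite integralB_EFin // e // subee //; exact: integrable_fin_num.
Qed.

Lemma ce_unique A f g h : sigma_subfield P A ->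
  is_cond_exp P A f g -> is_cond_exp P A f h ->
  exists N, [/\ measurable N, P N = 0 & forall x, ~ N x -> g x = h x].
Proof.
move=> sA [mg ig eg] [mh ih eh].
have e : forall G, A G -> \int[P]_(x in G) (g x)%:E = \int[P]_(x in G) (h x)%:E.
  by move=> G AG; rewrite eg // eh.
have mg' := sf_meas sA mg; have mh' := sf_meas sA mh.
have m1 : measurable [set x | (h x < g x)%R].
  exact: meas_lt.
have m2 : measurable [set x | (g x < h x)%R].
  exact: meas_lt.
exists ([set x | (h x < g x)%R] `|` [set x | (g x < h x)%R]); split.
- exact: measurableU.
- have L1 : P [set x | (h x < g x)%R] <= 0 by rewrite (lt_null sA mg mh ig ih e).
  have L2 : P [set x | (g x < h x)%R] <= 0.
    by rewrite (lt_null sA mh mg ih ig) // => G AG; rewrite e.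
  apply/eqP; rewrite -measure_le0; apply: le_trans (measureU2 _ m1 m2) _.
  rewrite -[leRHS]adde0; exact: leeD L1 L2.
- move=> x /not_orP [/negP]; rewrite -leNgt => h1 /negP; rewrite -leNgt => h2.
  by apply/eqP; rewrite eq_le h1 h2.
Qed.

End S3.
Section S4.
Context d (T : measurableType d) (R : realType) (P : probability T R).
Local Open Scope ereal_scope.

Lemma Lnorm_ae p (f g : T -> R) : measurable_fun setT f -> measurable_fun setT g ->
  (exists N, [/\ measurable N, P N = 0 & forall x, ~ N x -> f x = g x]) ->
  Lnorm P p (EFin \o f) = Lnorm P p (EFin \o g).
Proof.
move=> mf mg [N [mN N0 fg]].
have aeq (F G : T -> \bar R) : (forall x, f x = g x -> F x = G x) ->
    \forall x \ae P, F x = G x.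
  move=> FG; exists N; split => // x /= nFG; apply: contrapT => Nx.
  by apply: nFG; apply: FG; apply: fg.
rewrite unlock; case: p => [r| |] /=.
- congr (_ `^ _); apply: ae_eq_integral => //.
  + apply/measurable_realfun.measurable_EFinP.
    apply: (@measurableT_comp _ _ _ _ _ _ (fun x : R => x `^ r)%R) => //.
    exact: measurableT_comp.
  + apply/measurable_realfun.measurable_EFinP.
    apply: (@measurableT_comp _ _ _ _ _ _ (fun x : R => x `^ r)%R) => //.
    exact: measurableT_comp.
  + exists N; split => // x /= nFG; apply: contrapT => Nx.
    by apply: nFG => _; rewrite fg.
- case: ifPn => // _; apply: eq_ess_sup; apply: aeq => x /= ->//.
- case: ifPn => // _; apply: eq_ess_inf; apply: aeq => x /= ->//.
Qed.

End S4.
Section S5.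
Context d (T : measurableType d) (R : realType) (P : probability T R).
Local Open Scope ereal_scope.

Lemma LnormZ' p (hp : 1 <= p) (f : T -> R) (c : R) :
  measurable_fun setT f -> Lnorm P p (EFin \o f) < +oo ->
  Lnorm P p (EFin \o (fun x => c * f x)%R) = `|c|%:E * Lnorm P p (EFin \o f).
Proof.
move=> mf ff.
have fL : f \in Lfun P p.
  by rewrite inE; apply/andP; split; rewrite inE.
have := LnormZ (Lfun_Sub hp fL) c.
move=> <-; apply: eq_Lnorm => x /=. by [].
Qed.

End S5.
Section S6.
Context d (T : measurableType d) (R : realType) (P : probability T R).
Local Open Scope ereal_scope.

Lemma mscale (f : T -> R) (c : R) : measurable_fun setT f ->
  measurable_fun setT (fun x => c * f x)%R.
Proof. by move=> mf; apply: measurable_funM. Qed.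

Lemma key p (hp : 1 <= p) (Op : (T -> R) -> (T -> R)) (f : T -> R) (s : R) :
  `|s|%R = 1%R -> measurable_fun setT f ->
  0 < Lnorm P p (EFin \o f) -> Lnorm P p (EFin \o f) < +oo ->
  (forall c : R, (0 < c)%R ->
     measurable_fun setT (Op (fun x => c * f x)%R) /\
     exists N, [/\ measurable N, P N = 0 &
       forall x, ~ N x -> Op (fun y => c * f y)%R x = (s * (c * f x))%R]) ->
  1 <= opnorm P p Op.
Proof.
move=> s1 mf L0 Loo hOp.
set L := Lnorm P p (EFin \o f) in L0 Loo.
have Lfin : L \is a fin_num by rewrite ge0_fin_numE // ltW.
have fL0 : (0 < fine L)%R by rewrite fine_gt0 // L0 Loo.
set c := (fine L)^-1%R.
have c0 : (0 < c)%R by rewrite invr_gt0.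
have [mOp [N [mN N0 hN]]] := hOp c c0.
set g := (fun x => c * f x)%R.
have mg : measurable_fun setT g by exact: mscale.
have Lg : Lnorm P p (EFin \o g) = 1.
  rewrite LnormZ' // -/L -(fineK Lfin) -EFinM gtr0_norm // mulVf //.
  by rewrite gt_eqF.
have -> : 1 = Lnorm P p (EFin \o Op g).
  rewrite (@Lnorm_ae _ _ _ P p _ (fun x => s * g x)%R) //.
  - rewrite LnormZ' //; last by move: Lg => /= ->; rewrite ltry.
    by rewrite s1 mul1e; apply/esym; exact: Lg.
  - exact: mscale.
  - by exists N; split.
apply: ereal_sup_ubound; exists g => //; split; last by rewrite Lg.
by split => //; rewrite Lg ltry.
Qed.

End S6.
Section S7.
Context d (T : measurableType d) (R : realType) (P : probability T R).
Local Open Scope ereal_scope.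

Lemma bnd_int (g : T -> R) (M : R) : measurable_fun setT g ->
  (forall x, `|g x| <= M)%R -> P.-integrable setT (EFin \o g).
Proof.
move=> mg bg; apply: measurable_bounded_integrable => //.
  by move: (probability_setT P) => /= ->; rewrite ltry.
exists M; split; first exact: num_real.
by move=> K MK x _ /=; apply: le_trans (bg x) (ltW MK).
Qed.

Lemma Lnorm_bnd p (hp : 1 <= p) (g : T -> R) (M : R) : measurable_fun setT g ->
  (forall x, `|g x| <= M)%R -> Lnorm P p (EFin \o g) < +oo.
Proof.
move=> mg bg; have M0 : (0 <= M)%R := le_trans (normr_ge0 (g point)) (bg point).
rewrite unlock; case: p hp => [r| |] //= r1.
- apply: poweR_lty; apply: (integrable_lty measurableT).
  have r0 : (0 <= r)%R by move: r1; rewrite lee_fin => /(le_trans ler01).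
  have := @bnd_int (fun x => `|g x| `^ r)%R (M `^ r) _ _; apply.
  + apply: (@measurableT_comp _ _ _ _ _ _ (fun x : R => x `^ r)%R) => //.
    exact: measurableT_comp.
  + move=> x; rewrite ger0_norm ?powR_ge0 //; apply: ge0_ler_powR => //.
- case: ifPn => // _; apply: le_lt_trans (ltry M); apply/ess_supP.
  by apply: nearW => x /=; rewrite lee_fin.
Qed.

Lemma Lnorm_pos p (hp : 1 <= p) (g : T -> R) : measurable_fun setT g ->
  ~ (exists N, [/\ measurable N, P N = 0 & forall x, ~ N x -> g x = 0%R]) ->
  0 < Lnorm P p (EFin \o g).
Proof.
move=> mg nN; rewrite lt_neqAle Lnorm_ge0 andbT; apply/eqP => /esym L0.
have p0 : 0 < p by apply: lt_le_trans hp.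
have [N [mN N0 sN]] := Lnorm_eq0_eq0 ((measurable_EFinP _ _).2 mg) p0 L0.
apply: nN; exists N; split => // x Nx; apply: contrapT => gx; apply: Nx; apply: sN.
move=> /(_ I) [] /=; exact: gx.
Qed.

End S7.
Section S8.
Context d (T : measurableType d) (R : realType) (P : probability T R).
Local Open Scope ereal_scope.

Lemma nullU (N1 N2 : set T) : measurable N1 -> measurable N2 ->
  P N1 = 0 -> P N2 = 0 -> P (N1 `|` N2) = 0.
Proof.
move=> m1 m2 h1 h2.
have L1 : P N1 <= 0 by rewrite h1.
have L2 : P N2 <= 0 by rewrite h2.
apply/eqP; rewrite -measure_le0; apply: le_trans (measureU2 _ m1 m2) _.
rewrite -[leRHS]adde0; exact: leeD L1 L2.
Qed.

Lemma nonnull_ex (N : set T) : measurable N -> P N = 0 -> exists x, ~ N x.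
Proof.
move=> mN N0; apply: contrapT => h.
have sN : [set: T] `<=` N.
  by move=> x _; apply: contrapT => nx; apply: h; exists x.
have : P [set: T] <= P N by apply: le_measure => //; rewrite inE.
move: (probability_setT P) N0 => /= -> ->.
by rewrite lee_fin ler10.
Qed.

Lemma sf_cst A (c : R) : sigma_subfield P A -> sf_measurable A (fun _ => c).
Proof. by move=> sA; apply: (mfun_sf sA); exact: measurable_cst. Qed.

Lemma ce_ae A f h : sigma_subfield P A -> is_cond_exp P A f h ->
  measurable_fun setT (cond_exp P A f) /\
  exists N, [/\ measurable N, P N = 0 & forall x, ~ N x -> cond_exp P A f x = h x].
Proof.
move=> sA H.
have hc : is_cond_exp P A f (cond_exp P A f).
  by rewrite /cond_exp; apply: xgetPex; exists h.
split; first by case: hc => + _ _; exact: (sf_meas sA).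
exact: ce_unique sA hc H.
Qed.

End S8.
Section S9.
Context d (T : measurableType d) (R : realType) (P : probability T R).
Local Open Scope ereal_scope.

Lemma part_ii p (hp : 1 <= p) A B : sigma_subfield P A -> sigma_subfield P B ->
  has_indep_event P A B ->
  1 <= opnorm P p (fun f x => (cond_exp P A f x - cond_exp P B f x)%R).
Proof.
move=> sA sB [E [AE PE0 PE1 ind]].
have mE : measurable E := sA.1 _ AE.
have PEfin : P E \is a fin_num.
  by rewrite ge0_fin_numE ?measure_ge0 // (lt_trans PE1) // ltry.
set a := fine (P E).
have aE : a%:E = P E := fineK PEfin.
have a0 : (0 < a)%R by rewrite -lte_fin aE.
have a1 : (a < 1)%R by rewrite -lte_fin aE.
set f := (fun x => \1_E x - a)%R.
have fA : measurable_fun [set: g_sigma_algebraType A] f.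
  apply: measurable_realfun.measurable_funB => //.
  apply: (@measurable_indic _ (g_sigma_algebraType A)).
  by rewrite (ssf_gsat sA).
have mf : measurable_fun setT f := sf_meas sA (mfun_sf sA fA).
have fb : forall x, (`|f x| <= 1)%R.
  move=> x; rewrite /f indicE; case: (x \in E) => /=.
    rewrite ger0_norm; first by rewrite gerBl // ltW.
    by rewrite subr_ge0 ltW.
  by rewrite sub0r normrN ger0_norm ltW.
have fnz : forall x, f x != 0%R.
  move=> x; rewrite /f indicE; case: (x \in E) => /=.
    by rewrite subr_eq0 eq_sym lt_eqF.
  by rewrite sub0r oppr_eq0 gt_eqF.
apply: (key hp (s := 1%R) _ mf); first exact: normr1.
- apply: Lnorm_pos => // -[N [mN N0 hN]].
  have [x Nx] := nonnull_ex mN N0.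
  by move: (fnz x); rewrite hN // eqxx.
- exact: (@Lnorm_bnd _ _ _ P p hp f 1%R mf fb).
move=> c c0; set g := (fun x => c * f x)%R.
have gA : measurable_fun [set: g_sigma_algebraType A] g.
  exact: measurable_funM.
have mg : measurable_fun setT g := sf_meas sA (mfun_sf sA gA).
have ig : P.-integrable setT (EFin \o g).
  apply: (@bnd_int _ _ _ P _ c) => // x; rewrite /g normrM gtr0_norm //.
  by rewrite -[leRHS]mulr1 ler_pM2l.
have v1 : is_cond_exp P A g g by split => //; exact: (mfun_sf sA gA).
have v2 : is_cond_exp P B g (fun _ => 0%R).
  split; first exact: (@sf_cst _ _ _ P B 0%R sB).
    by apply: (@bnd_int _ _ _ P _ 0%R) => // x; rewrite normr0.
  move=> G BG; have mG : measurable G := sB.1 _ BG.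
  rewrite (eq_integral (cst 0)) // integral0.
  have igG : P.-integrable G (EFin \o f).
    exact: (integrableS measurableT mG (@subsetT _ _) (@bnd_int _ _ _ P f 1%R mf fb)).
  rewrite (eq_integral (fun x => c%:E * (f x)%:E)); last by move=> x _; rewrite EFinM.
  rewrite integralZl //.
  rewrite (eq_integral (fun x => (\1_E x)%:E - (cst a x)%:E)); last first.
    by move=> x _; rewrite /f EFinB.
  have i1 : P.-integrable G (EFin \o (\1_E : T -> R)).
    apply: (integrableS measurableT mG (@subsetT _ _)).
    apply: (@bnd_int _ _ _ P _ 1%R); first exact: measurable_indic.
    by move=> x; rewrite indicE; case: (x \in E); rewrite /= ?normr1 ?normr0.
  have i2 : P.-integrable G (EFin \o (cst a : T -> R)).
    apply: (integrableS measurableT mG (@subsetT _ _)).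
    exact: (@bnd_int _ _ _ P _ `|a|%R).
  rewrite integralB_EFin //.
  have -> : \int[P]_(x in G) (cst a x)%:E = a%:E * P G := integral_cst P mG a%:E.
  rewrite integral_indic //; move: (ind G BG) => /= ->; rewrite -aE subee ?mule0 //.
  by rewrite fin_numM // ge0_fin_numE ?measure_ge0 // (le_lt_trans (probability_le1 _ _)) // ltry.
have [mO1 [N1 [mN1 N10 h1]]] := ce_ae sA v1.
have [mO2 [N2 [mN2 N20 h2]]] := ce_ae sB v2.
split; first exact: measurable_realfun.measurable_funB.
exists (N1 `|` N2); split; [exact: measurableU|exact: nullU|].
move=> x /not_orP [nx1 nx2]; rewrite h1 // h2 // subr0 mul1r.
by [].
Qed.

End S9.
Section T1.
Context d (T : measurableType d) (R : realType) (P : probability T R).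
Local Open Scope ereal_scope.

Lemma sf_mono A B (g : T -> R) : A `<=` B -> sf_measurable A g -> sf_measurable B g.
Proof. by move=> AB mg Y mY; apply: AB; exact: mg. Qed.

Lemma gsat_meas A (X : set T) : sigma_subfield P A -> A X ->
  (@measurable _ (g_sigma_algebraType A)) X.
Proof. by move=> sA AX; rewrite (ssf_gsat sA). Qed.

Lemma compl A (E : set T) (h : T -> R) : sigma_subfield P A -> measurable E ->
  sf_measurable A h ->
  (exists N, [/\ measurable N, P N = 0 & forall x, ~ N x -> \1_E x = h x]) ->
  A E.
Proof.
move=> sA mE mh [N [mN N0 hN]].
have AN : A N := ssf_null sA mN N0.
have AEN : A (E `&` N).
  apply: (ssf_null sA); first exact: measurableI.
  apply: (subset_measure0 (mu:=P) (measurableI _ _ mE mN) mN _ N0).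
  exact: subIsetr.
have Ah1 : A (h @^-1` [set 1%R]) := mh _ (measurable_set1 1%R).
have : (@measurable _ (g_sigma_algebraType A))
   ((E `&` N) `|` (h @^-1` [set 1%R] `&` ~` N)).
  apply: measurableU; first exact: gsat_meas.
  apply: measurableI; first exact: gsat_meas.
  by apply: measurableC; exact: gsat_meas.
rewrite (ssf_gsat sA).
suff -> : (E `&` N) `|` (h @^-1` [set 1%R] `&` ~` N) = E by [].
apply/seteqP; split => x.
- move=> [[]//|[/= hx1 nNx]]; apply: contrapT => nEx.
  have := hN x nNx; rewrite indicE memNset // hx1 => /eqP.
  by rewrite eq_sym oner_eq0.
- move=> Ex; have [Nx|nNx] := pselect (N x); first by left.
  right; split => //=.
  by rewrite -hN // indicE mem_set.
Qed.

End T1.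
Section T2.
Context d (T : measurableType d) (R : realType) (P : probability T R).
Local Open Scope ereal_scope.

Lemma part_i_core p (hp : 1 <= p) A B E (g : T -> R) :
  sigma_subfield P A -> sigma_subfield P B -> A `<=` B -> B E -> ~ A E ->
  sf_measurable A g -> (forall x, 0 <= g x <= 1)%R ->
  (forall c : R, (0 < c)%R ->
    measurable_fun setT (cond_exp P A (fun x => c * (\1_E x - g x))%R) /\
    exists N, [/\ measurable N, P N = 0 &
      forall x, ~ N x -> cond_exp P A (fun x => c * (\1_E x - g x))%R x = 0%R]) ->
  1 <= opnorm P p (fun f x => (cond_exp P B f x - cond_exp P A f x)%R).
Proof.
move=> sA sB AB BE nAE mgA g01 hA.
have mE := sB.1 _ BE.
set f := (fun x => \1_E x - g x)%R.
have fB : measurable_fun [set: g_sigma_algebraType B] f.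
  apply: measurable_realfun.measurable_funB.
    apply: (@measurable_indic _ (g_sigma_algebraType B)); exact: (gsat_meas sB BE).
  exact: (sf_mfun sB (sf_mono AB mgA)).
have mf := sf_meas sB (mfun_sf sB fB).
have fb : forall x, (`|f x| <= 1)%R.
  move=> x; have /andP[g0 g1] := g01 x; rewrite /f indicE; case: (x \in E) => /=.
    by rewrite ger0_norm ?subr_ge0 // gerBl.
  by rewrite sub0r normrN ger0_norm.
apply: (key hp (s := 1%R) _ mf); first exact: normr1.
- apply: Lnorm_pos => // -[N [mN N0 hN]]; apply: nAE.
  apply: (compl sA mE mgA); exists N; split => // x nx.
  by apply/eqP; rewrite -subr_eq0; apply/eqP; exact: hN.
- exact: (@Lnorm_bnd _ _ _ P p hp f 1%R mf fb).
move=> c c0; set h := (fun x => c * f x)%R.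
have hB : measurable_fun [set: g_sigma_algebraType B] h by exact: measurable_funM.
have mh : measurable_fun setT h := sf_meas sB (mfun_sf sB hB).
have ih : P.-integrable setT (EFin \o h).
  apply: (@bnd_int _ _ _ P _ c) => // x; rewrite /h normrM gtr0_norm //.
  by rewrite -[leRHS]mulr1 ler_pM2l.
have v1 : is_cond_exp P B h h by split => //; exact: (mfun_sf sB hB).
have [mO1 [N1 [mN1 N10 h1]]] := ce_ae sB v1.
have [mO2 [N2 [mN2 N20 h2]]] := hA c c0.
split; first exact: measurable_realfun.measurable_funB.
exists (N1 `|` N2); split; [exact: measurableU|exact: nullU|].
move=> x /not_orP [nx1 nx2]; rewrite h1 // h2 // subr0 mul1r.
by [].
Qed.

End T2.
Section T3.
Context d (T : measurableType d) (R : realType) (P : probability T R).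
Local Open Scope ereal_scope.

Lemma part_i p (hp : 1 <= p) A B : sigma_subfield P A -> sigma_subfield P B ->
  A `<` B ->
  1 <= opnorm P p (fun f x => (cond_exp P B f x - cond_exp P A f x)%R).
Proof.
move=> sA sB [AB nBA].
have [E [BE nAE]] : exists E, B E /\ ~ A E.
  apply: contrapT => h; apply: nBA => E BE; apply: contrapT => nAE.
  by apply: h; exists E.
have mE : measurable E := sB.1 _ BE.
have bI : forall x, (`|(\1_E x : R)| <= 1)%R.
  by move=> x; rewrite indicE; case: (x \in E); rewrite /= ?normr1 ?normr0.
have i1 : P.-integrable setT (EFin \o (\1_E : T -> R)).
  by apply: (@bnd_int _ _ _ P _ 1%R) => //; exact: measurable_indic.
case: (pselect (exists g0, is_cond_exp P A (\1_E : T -> R) g0)) =>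
    [[g0 [mg0 ig0 eg0]]|nex].
- have m0 := sf_meas sA mg0.
  have null1 : P [set x | (g0 x < 0)%R] = 0.
    have AD : A [set x | (g0 x < 0)%R].
      have := mg0 _ (measurable_itv `]-oo, 0%R[).
      suff -> : [set x | (g0 x < 0)%R] = g0 @^-1` `]-oo, 0%R[ by [].
      by apply/seteqP; split => x /=; rewrite in_itv.
    have mD := sA.1 _ AD.
    have igD := integrableS measurableT mD (@subsetT _ _) ig0.
    have i0D : P.-integrable [set x | (g0 x < 0)%R] (EFin \o (cst 0%R : T -> R)).
      apply: (integrableS measurableT mD (@subsetT _ _)).
      by apply: (@bnd_int _ _ _ P _ 0%R) => // x; rewrite normr0.
    apply: (null_pos mD (u := (cst 0%R \- g0)%R)).
    + exact: intB_EFin.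
    + by move=> x /=; rewrite sub0r oppr_gt0.
    rewrite (eq_integral (fun x => (cst 0%R x)%:E - (g0 x)%:E)); last first.
      by move=> x _; rewrite /= EFinB.
    rewrite integralB_EFin // eg0 // integral_indic //.
    have -> : \int[P]_(x in [set x | (g0 x < 0)%R]) (cst 0%R x)%:E = 0.
      by rewrite (integral_cst P mD 0%:E : \int[P]_(x in _) (cst 0%R x)%:E = _) mul0e.
    by rewrite sub0e oppe_le0 measure_ge0.
  have null2 : P [set x | (1 < g0 x)%R] = 0.
    have AD : A [set x | (1 < g0 x)%R].
      have := mg0 _ (measurable_itv `]1%R, +oo[).
      suff -> : [set x | (1 < g0 x)%R] = g0 @^-1` `]1%R, +oo[ by [].
      by apply/seteqP; split => x /=; rewrite in_itv /= andbT.
    have mD := sA.1 _ AD.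
    have igD := integrableS measurableT mD (@subsetT _ _) ig0.
    have i0D : P.-integrable [set x | (1 < g0 x)%R] (EFin \o (cst 1%R : T -> R)).
      apply: (integrableS measurableT mD (@subsetT _ _)).
      by apply: (@bnd_int _ _ _ P _ 1%R) => // x; rewrite normr1.
    apply: (null_pos mD (u := (g0 \- cst 1%R)%R)).
    + exact: intB_EFin.
    + by move=> x /=; rewrite subr_gt0.
    rewrite (eq_integral (fun x => (g0 x)%:E - (cst 1%R x)%:E)); last first.
      by move=> x _; rewrite /= EFinB.
    rewrite integralB_EFin // eg0 // integral_indic //.
    have -> : \int[P]_(x in [set x | (1 < g0 x)%R]) (cst 1%R x)%:E =
        P [set x | (1 < g0 x)%R].
      by rewrite (integral_cst P mD 1%:E : \int[P]_(x in _) (cst 1%R x)%:E = _) mul1e.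
    by rewrite sube_le0 measureIr.
  set g := ((g0 \max cst 0%R) \min cst 1%R)%R.
  have gA : sf_measurable A g.
    apply: (mfun_sf sA); apply: measurable_minr => //.
    by apply: measurable_maxr => //; exact: (sf_mfun sA mg0).
  have g01 : forall x, (0 <= g x <= 1)%R.
    move=> x; rewrite /g /=; apply/andP; split.
      by rewrite le_min ler01 le_max lexx orbT.
    by rewrite ge_min lexx orbT.
  set N := [set x | (g0 x < 0)%R] `|` [set x | (1 < g0 x)%R].
  have mN : measurable N.
    apply: measurableU.
      exact: (meas_lt (measurable_cst _) m0).
    exact: (meas_lt m0 (measurable_cst _)).
  have N0 : P N = 0 by apply: nullU => //; [exact: (meas_lt (measurable_cst _) m0)|
                                            exact: (meas_lt m0 (measurable_cst _))].
  have gg0 : forall x, ~ N x -> g x = g0 x.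
    move=> x /not_orP [/negP + /negP]; rewrite -!leNgt => h0 h1.
    by rewrite /g /= max_l // min_l.
  have mg : measurable_fun setT g := sf_meas sA gA.
  have eg : forall G, A G ->
      \int[P]_(x in G) (g x)%:E = \int[P]_(x in G) (\1_E x)%:E.
    move=> G AG; have mG := sA.1 _ AG; rewrite -eg0 //.
    apply: ae_eq_integral => //.
    + by apply/measurable_realfun.measurable_EFinP; exact: measurable_funTS.
    + by apply/measurable_realfun.measurable_EFinP; exact: measurable_funTS.
    exists N; split => // x /= h; apply: contrapT => nx; apply: h => _.
    by rewrite gg0.
  have ig : P.-integrable setT (EFin \o g).
    apply: (@bnd_int _ _ _ P _ 1%R) => // x.
    by have /andP[g0x g1x] := g01 x; rewrite ger0_norm.
  apply: (part_i_core hp sA sB AB BE nAE gA g01) => c c0.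
  apply: (ce_ae sA); split; first exact: (@sf_cst _ _ _ P A 0%R sA).
    by apply: (@bnd_int _ _ _ P _ 0%R) => // x; rewrite normr0.
  move=> G AG; have mG := sA.1 _ AG.
  rewrite (eq_integral (cst 0)) // integral0.
  have iEG : P.-integrable G (EFin \o (\1_E : T -> R)).
    exact: (integrableS measurableT mG (@subsetT _ _)).
  have igG : P.-integrable G (EFin \o g).
    exact: (integrableS measurableT mG (@subsetT _ _)).
  rewrite (eq_integral (fun x => c%:E * ((\1_E x)%:E - (g x)%:E))); last first.
    by move=> x _; rewrite EFinM EFinB.
  rewrite integralZl //; last first.
    rewrite (_ : (fun x => _) = EFin \o (\1_E \- g)%R); last first.
      by apply/funext => x /=; rewrite EFinB.
    exact: intB_EFin.
  rewrite integralB_EFin // eg // subee ?mule0 //.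
  exact: integrable_fin_num.
- apply: (part_i_core (g := fun _ => 0%R) hp sA sB AB BE nAE (@sf_cst _ _ _ P A 0%R sA)).
    by move=> x; rewrite lexx ler01.
  move=> c c0.
  have -> : cond_exp P A (fun x => c * (\1_E x - (fun _ => 0) x))%R = fun _ => 0%R.
    rewrite /cond_exp; apply: xgetPN => h [mh ih eh]; apply: nex.
    exists (fun x => c^-1 * h x)%R; split.
    + apply: (mfun_sf sA); apply: measurable_funM => //.
      exact: (sf_mfun sA mh).
    + rewrite (_ : EFin \o _ = fun x => c^-1%:E * (EFin \o h) x); last first.
        by apply/funext => x /=; rewrite EFinM.
      exact: integrableZl.
    + move=> G AG; have mG := sA.1 _ AG.
      have ihG : P.-integrable G (EFin \o h).
        exact: (integrableS measurableT mG (@subsetT _ _)).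
      have iEG : P.-integrable G (EFin \o (\1_E : T -> R)).
        exact: (integrableS measurableT mG (@subsetT _ _)).
      rewrite (eq_integral (fun x => c^-1%:E * (h x)%:E)); last first.
        by move=> x _; rewrite EFinM.
      rewrite integralZl // eh //.
      rewrite (eq_integral (fun x => c%:E * (\1_E x)%:E)); last first.
        by move=> x _; rewrite subr0 EFinM.
      rewrite integralZl // muleA -EFinM mulVf ?mul1e //.
      by rewrite gt_eqF.
  split; first exact: measurable_cst.
  by exists set0; split => //; rewrite measure0.
Qed.

End T3.
Section U1.
Context d (T : measurableType d) (R : realType) (P : probability T R).
Local Open Scope ereal_scope.

Lemma opnormN' p (A B : set (set T)) :
  opnorm P p (fun f x => (cond_exp P A f x - cond_exp P B f x)%R) =
  opnorm P p (fun f x => (cond_exp P B f x - cond_exp P A f x)%R).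
Proof.
rewrite /opnorm; congr ereal_sup; apply/seteqP; split => _ [f Sf <-].
  exists f => //; rewrite -oppe_Lnorm; apply: eq_Lnorm => x /=.
  by rewrite opprB.
exists f => //; rewrite -oppe_Lnorm; apply: eq_Lnorm => x /=.
by rewrite opprB.
Qed.

Lemma not_cvg0 (u : nat -> \bar R) :
  (forall N, exists n, (N <= n)%N /\ 1 <= u n) -> ~ (u n @[n --> \oo] --> 0).
Proof.
move=> hS /fine_cvgP [hfin hc].
have H : \forall n \near \oo, u n < 1.
  apply: filterS2 hfin (cvgr_lt 0%R hc 1%R ltr01) => n fn ln.
  by rewrite -(fineK fn) lte_fin.
case: H => N _ HN; have [n [Nn un]] := hS N.
by have := HN n Nn; rewrite ltNge un.
Qed.

Lemma inf_freq (S : set nat) : infinite_set S -> forall N, exists n, (N <= n)%N /\ S n.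
Proof.
move=> iS N; apply: contrapT => h; apply: iS.
apply: (sub_finite_set _ (finite_II N)) => n Sn /=.
rewrite ltnNge; apply/negP => Nn; apply: h; by exists n.
Qed.

Lemma ssf_bigcup (Bs : nat -> set (set T)) : (forall n, sigma_subfield P (Bs n)) ->
  sigma_subfield P (<<s \bigcup_k Bs k >>).
Proof.
move=> hB; split.
  apply: smallest_sub; first exact: sigma_algebra_measurable.
  by move=> X [k _ BkX]; exact: (hB k).1.
apply/seteqP; split.
  by move=> X LX; apply: sub_gen_smallest; left.
apply: smallest_sub; first exact: smallest_sigma_algebra.
move=> X [//|[mX X0]]; apply: sub_gen_smallest; exists 0%N => //.
exact: (ssf_null (hB 0%N)).
Qed.

Lemma ssf_bigcap (Bs : nat -> set (set T)) : (forall n, sigma_subfield P (Bs n)) ->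
  sigma_subfield P (\bigcap_k Bs k).
Proof.
move=> hB; split.
  by move=> X hX; exact: (hB 0%N).1 _ (hX 0%N I).
apply/seteqP; split.
  by move=> X LX; apply: sub_gen_smallest; left.
move=> X gX k _; apply: (smallest_sub (ssf_salg (hB k))) gX.
move=> Y [LY|[mY Y0]]; first exact: LY.
exact: (ssf_null (hB k)).
Qed.

End U1.
Unset Implicit Arguments.
Theorem mainTheorem13 (d : measure_display) (T : measurableType d)
  (R : realType) (P : probability T R) (p : \bar R) (hp : (1 <= p)%E) :
  (* (i) *)
  (forall A B : set (set T), sigma_subfield P A -> sigma_subfield P B ->
     A `<` B ->
     (1 <= opnorm P p (fun f x => (cond_exp P B f x - cond_exp P A f x)%R))%E) /\
  (* (ii) *)
  (forall A B : set (set T), sigma_subfield P A -> sigma_subfield P B ->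
     has_indep_event P A B ->
     (1 <= opnorm P p (fun f x => (cond_exp P A f x - cond_exp P B f x)%R))%E) /\
  (* consequence for sequences *)
  (forall Bs : nat -> set (set T), (forall n, sigma_subfield P (Bs n)) ->
     (infinite_set [set n | Bs n `<` Bs 0%N \/ Bs 0%N `<` Bs n] \/
      infinite_set [set n | has_indep_event P (Bs n) (Bs 0%N) \/
                            has_indep_event P (Bs 0%N) (Bs n)]) ->
     ~ (opnorm P p (fun f x => (cond_exp P (Bs n) f x - cond_exp P (Bs 0%N) f x)%R)
          @[n --> \oo] --> 0%E)) /\
  (* increasing, not ultimately constant *)
  (forall Bs : nat -> set (set T), (forall n, sigma_subfield P (Bs n)) ->
     (forall n m, (n <= m)%N -> Bs n `<=` Bs m) ->
     ~ (exists N, forall n, (N <= n)%N -> Bs n = Bs N) ->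
     ~ (opnorm P p (fun f x => (cond_exp P (Bs n) f x - cond_exp P (<<s \bigcup_k Bs k >>) f x)%R)
          @[n --> \oo] --> 0%E)) /\
  (* decreasing, not ultimately constant *)
  (forall Bs : nat -> set (set T), (forall n, sigma_subfield P (Bs n)) ->
     (forall n m, (n <= m)%N -> Bs m `<=` Bs n) ->
     ~ (exists N, forall n, (N <= n)%N -> Bs n = Bs N) ->
     ~ (opnorm P p (fun f x => (cond_exp P (Bs n) f x - cond_exp P (\bigcap_k Bs k) f x)%R)
          @[n --> \oo] --> 0%E)).
Proof.
split; [|split; [|split; [|split]]].
- by move=> A B sA sB AB; exact: part_i.
- by move=> A B sA sB h; exact: part_ii.
- move=> Bs hB hS; apply: not_cvg0 => N.
  case: hS => iS; have [n [Nn Sn]] := inf_freq iS N; exists n; split => //=.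
  + case: Sn => h.
      by rewrite opnormN'; exact: (part_i hp (hB n) (hB 0%N) h).
    exact: (part_i hp (hB 0%N) (hB n) h).
  + case: Sn => h.
      exact: (part_ii hp (hB n) (hB 0%N) h).
    by rewrite opnormN'; exact: (part_ii hp (hB 0%N) (hB n) h).
- move=> Bs hB mono nconst; apply: not_cvg0 => N; exists N; split => //=.
  rewrite opnormN'; apply: (part_i hp (hB N) (ssf_bigcup hB)); split.
    by move=> X h; apply: sub_gen_smallest; exists N.
  move=> LB; apply: nconst; exists N => n Nn; apply/seteqP; split; last exact: mono.
  by move=> X h; apply: LB; apply: sub_gen_smallest; exists n.
- move=> Bs hB mono nconst; apply: not_cvg0 => N; exists N; split => //=.
  apply: (part_i hp (ssf_bigcap hB) (hB N)); split.
    by move=> X h; exact: h N I.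
  move=> BL; apply: nconst; exists N => n Nn; apply/seteqP; split; first exact: mono.
  by move=> X h; exact: BL _ h n I.
Qed.
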